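(* Let $U$ be a finite set of men and $W_1\subseteq W_2$ finite sets of women, with each man having a strict total order over $W_2$ and each woman a strict total order over $U$. Let $\Delta_1$ be the set of stable matchings of the instance $(U,W_1)$ and $\Delta_2$ the set of stable matchings of the instance $(U,W_2)$. Let $(M_1,M_2)\in\Delta_1\times\Delta_2$ and let $M_1'\in\Delta_1$ be such that $M_1'$ men-dominates $M_1$. Then there exists $M_2'\in\Delta_2$ such that $|M_1'\setminus M_2'|\le |M_1\setminus M_2|$.
   Context: A matching between a set of men $U$ and a set of women $W$ is a set of pairs $(u,w)\in U\times W$ such that every person belongs to at most one pair; if $(u,w)$ is in the matching, $w$ is the partner of $u$ and vice versa. Preferences are strict total orders; for an instance $(U,W')$ with $W'\subseteq W_2$, the preferences are the restrictions of the given ones. A blocking pair of a matching $M$ is a pair $(u,w)\notin M$ such that ($u$ is unmatched in $M$ or $u$ prefers $w$ to his partner in $M$) and ($w$ is unmatched in $M$ or $w$ prefers $u$ to her partner in $M$). A matching is stable if it has no blocking pair. Given two stable matchings $M,M'$ of the same instance, $M$ men-dominates $M'$ if every man's partner in $M$ is at least as good for him as his partner in $M'$ (in particular he is matched in $M$ whenever matched in $M'$). Matchings are viewed as sets of pairs, so $|M_1\setminus M_2|$ is the number of pairs of $M_1$ not in $M_2$. *)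

(* Defs.v *)
From mathcomp Require Import all_boot.
Set Implicit Arguments. Unset Strict Implicit. Unset Printing Implicit Defensive.

Definition strict_total_order (T : eqType) (r : rel T) : Prop :=
  [/\ forall x, ~~ r x x,
      forall x y z, r x y -> r y z -> r x z &
      forall x y, x != y -> r x y || r y x].

Section Matchings.
Variables (U W : finType).
(* pm u w w' : man u strictly prefers w to w';  pw w u u' : woman w strictly
   prefers u to u'. *)
Variables (pm : U -> rel W) (pw : W -> rel U).

Definition is_matching (Ws : {set W}) (M : {set U * W}) : Prop :=
  [/\ forall p, p \in M -> p.2 \in Ws,
      forall u w w', (u, w) \in M -> (u, w') \in M -> w = w' &
      forall u u' w, (u, w) \in M -> (u', w) \in M -> u = u'].

Definition man_unmatched (M : {set U * W}) (u : U) : Prop :=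
  forall w, (u, w) \notin M.
Definition woman_unmatched (M : {set U * W}) (w : W) : Prop :=
  forall u, (u, w) \notin M.

Definition blocking_pair (Ws : {set W}) (M : {set U * W}) (u : U) (w : W) : Prop :=
  [/\ w \in Ws, (u, w) \notin M,
      man_unmatched M u \/ (exists w', (u, w') \in M /\ pm u w w') &
      woman_unmatched M w \/ (exists u', (u', w) \in M /\ pw w u u')].

Definition stable (Ws : {set W}) (M : {set U * W}) : Prop :=
  is_matching Ws M /\ forall u w, ~ blocking_pair Ws M u w.

Definition men_dominates (M M' : {set U * W}) : Prop :=
  forall u w', (u, w') \in M' ->
    exists w, (u, w) \in M /\ (w = w' \/ pm u w w').

End Matchings.

(* Main.v *)
Require Import Defs.
From mathcomp Require Import all_boot.
From Stdlib Require Import Classical.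
Set Implicit Arguments. Unset Strict Implicit.

Section Proof.
Variables (U W : finType) (pm : U -> rel W) (pw : W -> rel U).
Hypothesis Hm : forall u, strict_total_order (pm u).
Hypothesis Hw : forall w, strict_total_order (pw w).

Lemma pm_irr u a : ~ pm u a a.
Proof. by case: (Hm u) => H _ _; apply/negP. Qed.
Lemma pm_tr u a b c : pm u a b -> pm u b c -> pm u a c.
Proof. by case: (Hm u) => _ H _; apply: H. Qed.
Lemma pm_asym u a b : pm u a b -> pm u b a -> False.
Proof. by move=> h1 h2; exact: (pm_irr (pm_tr h1 h2)). Qed.
Lemma pm_tot u a b : a <> b -> pm u a b \/ pm u b a.
Proof. case: (Hm u) => _ _ H ne; by move/orP: (H a b (introN eqP ne)). Qed.
Lemma pw_irr w a : ~ pw w a a.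
Proof. by case: (Hw w) => H _ _; apply/negP. Qed.
Lemma pw_tr w a b c : pw w a b -> pw w b c -> pw w a c.
Proof. by case: (Hw w) => _ H _; apply: H. Qed.
Lemma pw_asym w a b : pw w a b -> pw w b a -> False.
Proof. by move=> h1 h2; exact: (pw_irr (pw_tr h1 h2)). Qed.
Lemma pw_tot w a b : a <> b -> pw w a b \/ pw w b a.
Proof. case: (Hw w) => _ _ H ne; by move/orP: (H a b (introN eqP ne)). Qed.

Variables (W1 W2 : {set W}) (A B : {set U * W}).
Hypothesis HW : W1 \subset W2.
Hypothesis HA : stable pm pw W1 A.
Hypothesis HB : stable pm pw W2 B.

Definition J : {set U * W} :=
  [set p | ((p \in A) && [forall w, ((p.1, w) \in B) ==> ~~ pm p.1 w p.2])
        || ((p \in B) && [forall w, ((p.1, w) \in A) ==> ~~ pm p.1 w p.2])].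

Lemma inJ u w : (u, w) \in J <->
  ((u, w) \in A /\ forall w', (u, w') \in B -> ~ pm u w' w) \/
  ((u, w) \in B /\ forall w', (u, w') \in A -> ~ pm u w' w).
Proof.
rewrite inE /=; split.
- case/orP=> /andP [h /forallP f]; [left|right]; split=> // w' hw';
  by move: (f w'); rewrite hw' /= => /negP.
- case=> [[h f]|[h f]]; apply/orP; [left|right]; rewrite h /=;
  apply/forallP=> w'; apply/implyP=> hw'; apply/negP; exact: f.
Qed.


Lemma Jmatch : is_matching W2 J.
Proof.
case: HA => [[Aw Am Af] As]; case: HB => [[Bw Bm Bf] Bs].
split.
- case=> u w /inJ [[h _]|[h _]]; last exact: Bw h.
  exact: (subsetP HW _ (Aw _ h)).
- move=> u w w' /inJ h1 /inJ h2.
  case: h1 h2 => [[a1 f1]|[b1 f1]] [[a2 f2]|[b2 f2]].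
  + exact: Am a1 a2.
  + case: (classic (w = w')) => // ne; case: (pm_tot u ne) => h.
    * by case: (f2 _ a1 h).
    * by case: (f1 _ b2 h).
  + case: (classic (w = w')) => // ne; case: (pm_tot u ne) => h.
    * by case: (f2 _ b1 h).
    * by case: (f1 _ a2 h).
  + exact: Bm b1 b2.
- have key : forall u1 u2 w, (u1, w) \in A -> (forall w', (u1, w') \in B -> ~ pm u1 w' w) ->
      (u2, w) \in B -> (forall w', (u2, w') \in A -> ~ pm u2 w' w) -> u1 = u2.
  move=> u1 u2 w a1 f1 b2 f2; case: (classic (u1 = u2)) => // ne.
  have nb1 : (u1, w) \notin B by apply/negP => h; apply: ne; exact: Bf h b2.
  have na2 : (u2, w) \notin A by apply/negP => h; apply: ne; exact: Af a1 h.
  case: (pw_tot w ne) => hp.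
  + case: (Bs u1 w); split=> //; first exact: Bw b2.
    * case: (classic (exists w', (u1, w') \in B)) => [[w' hw']|nw]; last first.
        by left=> w'; apply/negP=> hw'; apply: nw; exists w'.
      right; exists w'; split=> //.
      have ne' : w <> w' by move=> e; rewrite e hw' in nb1.
      by case: (pm_tot u1 ne') => // h; case: (f1 _ hw' h).
    * by right; exists u2.
  + case: (As u2 w); split=> //; first exact: Aw a1.
    * case: (classic (exists w', (u2, w') \in A)) => [[w' hw']|nw]; last first.
        by left=> w'; apply/negP=> hw'; apply: nw; exists w'.
      right; exists w'; split=> //.
      have ne' : w <> w' by move=> e; rewrite e hw' in na2.
      by case: (pm_tot u2 ne') => // h; case: (f2 _ hw' h).
    * by right; exists u1.
- move=> u u' w /inJ h1 /inJ h2.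
  case: h1 h2 => [[a1 f1]|[b1 f1]] [[a2 f2]|[b2 f2]].
  + exact: Af a1 a2.
  + exact: key a1 f1 b2 f2.
  + by symmetry; exact: key a2 f2 b1 f1.
  + exact: Bf b1 b2.
Qed.


Definition S : {set U} :=
  [set u | [exists w, ((u, w) \in A) && [forall w', ((u, w') \in B) ==> pm u w w']]].

Lemma inS u : u \in S <-> exists w, (u, w) \in A /\ forall w', (u, w') \in B -> pm u w w'.
Proof.
rewrite inE; split.
- case/existsP=> w /andP [h /forallP f]; exists w; split=> // w' hw'.
  by move: (f w'); rewrite hw'.
- case=> w [h f]; apply/existsP; exists w; rewrite h /=.
  apply/forallP=> w'; apply/implyP; exact: f.
Qed.

Lemma Sstep u w : u \in S -> (u, w) \in A -> exists v, (v, w) \in B /\ v \in S.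
Proof.
case: HA => [[Aw Am Af] As]; case: HB => [[Bw Bm Bf] Bs].
move=> /inS [w0 [a0 f0]] a; have e := Am _ _ _ a0 a; subst w0.
have nb : (u, w) \notin B by apply/negP => h; exact: (pm_irr (f0 _ h)).
case: (classic (exists v, (v, w) \in B)) => [[v bv]|nv]; last first.
  case: (Bs u w); split=> //; first exact: (subsetP HW _ (Aw _ a)).
  - case: (classic (exists w', (u, w') \in B)) => [[w' hw']|nw].
      by right; exists w'; split=> //; exact: f0.
    by left=> w'; apply/negP=> hw'; apply: nw; exists w'.
  - by left=> v; apply/negP=> hv; apply: nv; exists v.
exists v; split=> //.
have nuv : u <> v by move=> e; rewrite e bv in nb.
case: (pw_tot w nuv) => hp.
  case: (Bs u w); split=> //; first exact: (subsetP HW _ (Aw _ a)).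
  - case: (classic (exists w', (u, w') \in B)) => [[w' hw']|nw].
      by right; exists w'; split=> //; exact: f0.
    by left=> w'; apply/negP=> hw'; apply: nw; exists w'.
  - by right; exists v.
have na : (v, w) \notin A by apply/negP => h; apply: nuv; exact: Af a h.
case: (classic (exists w'', (v, w'') \in A)) => [[w'' hw'']|nw]; last first.
  case: (As v w); split=> //; first exact: Aw _ a.
  - by left=> w'; apply/negP=> hw'; apply: nw; exists w'.
  - by right; exists u.
have ne : w <> w'' by move=> e; rewrite e hw'' in na.
case: (pm_tot v ne) => hp'.
  case: (As v w); split=> //; first exact: Aw _ a.
  - by right; exists w''.
  - by right; exists u.
apply/inS; exists w''; split=> // w' hw'.
by have -> := Bm _ _ _ hw' bv.
Qed.

Lemma Ssurj v : v \in S -> exists w u, [/\ (v, w) \in B, (u, w) \in A & u \in S].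
Proof.
case: HA => [[Aw Am Af] As]; case: HB => [[Bw Bm Bf] Bs].
pose P := [set p in A | p.1 \in S].
pose Bws := [set p.2 | p in P].
pose Q := [set p in B | p.2 \in Bws].
pose C := [set p.1 | p in Q].
have cPS : #|[set p.1 | p in P]| = #|P|.
  apply: card_in_imset; case=> u1 w1 [u2 w2]; rewrite !inE /= => /andP [h1 _] /andP [h2 _] e.
  subst u2; by rewrite (Am _ _ _ h1 h2).
have ePS : [set p.1 | p in P] = S.
  apply/setP=> u; apply/imsetP/idP.
  - by case=> p; rewrite inE => /andP [_ h] ->.
  - move=> uS; case/inS: (uS) => w [a _]; exists (u, w) => //; by rewrite inE a.
have cBP : #|Bws| = #|P|.
  apply: card_in_imset; case=> u1 w1 [u2 w2]; rewrite !inE /= => /andP [h1 _] /andP [h2 _] e.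
  subst w2; by rewrite (Af _ _ _ h1 h2).
have eQB : [set p.2 | p in Q] = Bws.
  apply/setP=> w; apply/imsetP/idP.
  - by case=> p; rewrite inE => /andP [_ h] ->.
  - move=> wB; case/imsetP: (wB) => [[u w']]; rewrite inE /= => /andP [a uS] e; subst w'.
    case: (Sstep uS a) => x [bx _]; exists (x, w) => //; by rewrite inE bx.
have cQ : #|[set p.2 | p in Q]| = #|Q|.
  apply: card_in_imset; case=> u1 w1 [u2 w2]; rewrite !inE /= => /andP [h1 _] /andP [h2 _] e.
  subst w2; by rewrite (Bf _ _ _ h1 h2).
have cC : #|C| = #|Q|.
  apply: card_in_imset; case=> u1 w1 [u2 w2]; rewrite !inE /= => /andP [h1 _] /andP [h2 _] e.
  subst u2; by rewrite (Bm _ _ _ h1 h2).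
have CS : C \subset S.
  apply/subsetP=> x /imsetP [[v' w]]; rewrite inE /= => /andP [b wB] ->.
  case/imsetP: wB => [[u w']]; rewrite inE /= => /andP [a uS] e; subst w'.
  case: (Sstep uS a) => y [bx xS]; by rewrite (Bf _ _ _ b bx).
have eCS : C == S.
  rewrite eqEcard CS /= cC -cQ eQB cBP -cPS ePS //.
move=> vS; rewrite -(eqP eCS) in vS.
case/imsetP: vS => [[v' w]]; rewrite inE /= => /andP [b wB] e; subst v'.
case/imsetP: wB => [[u w']]; rewrite inE /= => /andP [a uS] e; subst w'.
by exists w, u.
Qed.


Lemma man_cond (M : {set U * W}) u w : (forall x, (u, x) \in M -> pm u w x) ->
  man_unmatched M u \/ (exists w', (u, w') \in M /\ pm u w w').
Proof.
move=> f; case: (classic (exists w', (u, w') \in M)) => [[w' hw']|nw].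
  by right; exists w'; split=> //; exact: f.
by left=> w'; apply/negP=> hw'; apply: nw; exists w'.
Qed.

Lemma JbestA u x : (u, x) \in A -> exists y, (u, y) \in J /\ (y = x \/ pm u y x).
Proof.
case: HA => [[Aw Am Af] As] a.
case: (classic (exists w', (u, w') \in B /\ pm u w' x)) => [[w' [b p]]|nw].
  exists w'; split; last by right.
  apply/inJ; right; split=> // x' a'; rewrite (Am _ _ _ a' a) => p'.
  exact: pm_asym p p'.
exists x; split; last by left.
apply/inJ; left; split=> // w' b p; apply: nw; by exists w'.
Qed.

Lemma JbestB u x : (u, x) \in B -> exists y, (u, y) \in J /\ (y = x \/ pm u y x).
Proof.
case: HB => [[Bw Bm Bf] Bs] a.
case: (classic (exists w', (u, w') \in A /\ pm u w' x)) => [[w' [b p]]|nw].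
  exists w'; split; last by right.
  apply/inJ; left; split=> // x' a'; rewrite (Bm _ _ _ a' a) => p'.
  exact: pm_asym p p'.
exists x; split; last by left.
apply/inJ; right; split=> // w' b p; apply: nw; by exists w'.
Qed.

Lemma Jstable u w : ~ blocking_pair pm pw W2 J u w.
Proof.
have [[Aw Am Af] As] := HA; have [[Bw Bm Bf] Bs] := HB.
have [_ Jm Jf] := Jmatch.
move=> [wW nJ man wom].
have pref : forall x, (exists y, (u, y) \in J /\ (y = x \/ pm u y x)) -> pm u w x.
  move=> x [y [hy ho]]; case: man => [um|[w' [hw' p]]].
    by move: (um y); rewrite hy.
  rewrite (Jm _ _ _ hw' hy) in p; case: ho => [<-//|]; exact: pm_tr.
have prefA : forall x, (u, x) \in A -> pm u w x by move=> x a; apply: pref; exact: JbestA.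
have prefB : forall x, (u, x) \in B -> pm u w x by move=> x a; apply: pref; exact: JbestB.
have nB : (u, w) \notin B by apply/negP=> h; exact: (pm_irr (prefB _ h)).
have nA : (u, w) \notin A by apply/negP=> h; exact: (pm_irr (prefA _ h)).
have fin : forall u', (u', w) \in J -> pw w u' u -> False.
  move=> u' j p; case: wom => [wu|[u3 [j3 p3]]].
    by move: (wu u'); rewrite j.
  rewrite (Jf _ _ _ j3 j) in p3; exact: pw_asym p p3.
case: (classic (exists u', (u', w) \in B)) => [[u' bu']|nu]; last first.
  apply: (Bs u w); split=> //; first exact: man_cond.
  by left=> v; apply/negP=> hv; apply: nu; exists v.
have nuu : u <> u' by move=> e; rewrite e bu' in nB.
case: (pw_tot w nuu) => hp.
  apply: (Bs u w); split=> //; first exact: man_cond.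
  by right; exists u'.
case: (boolP (u' \in S)) => uS.
  case: (Ssurj uS) => w0 [u'' [b0 a0 u''S]].
  rewrite (Bm _ _ _ b0 bu') in a0.
  case/inS: u''S => w1 [a1 f1]; rewrite (Am _ _ _ a1 a0) in f1.
  have j : (u'', w) \in J.
    apply/inJ; left; split=> // w' b p; exact: pm_asym (f1 _ b) p.
  have nuu'' : u <> u'' by move=> e; rewrite e a0 in nA.
  case: (pw_tot w nuu'') => hp''.
    apply: (As u w); split=> //; first exact: Aw _ a0.
      exact: man_cond.
    by right; exists u''.
  exact: fin j hp''.
have j : (u', w) \in J.
  apply/inJ; right; split=> // x a p; move/negP: uS; apply; apply/inS.
  exists x; split=> // w' b; by rewrite (Bm _ _ _ b bu').
exact: fin j hp.
Qed.

End Proof.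
Unset Implicit Arguments.

Theorem mainTheorem1 (U W : finType) (pm : U -> rel W) (pw : W -> rel U)
  (W1 W2 : {set W}) (M1 M2 M1' : {set U * W}) :
  (forall u, strict_total_order (pm u)) ->
  (forall w, strict_total_order (pw w)) ->
  W1 \subset W2 ->
  stable pm pw W1 M1 -> stable pm pw W2 M2 -> stable pm pw W1 M1' ->
  men_dominates pm M1' M1 ->
  exists M2' : {set U * W},
    stable pm pw W2 M2' /\ #|M1' :\: M2'| <= #|M1 :\: M2|.
Proof.
move=> Hm Hw HW H1 H2 H1' Hd.
exists (J pm M1' M2); split.
  split; first exact: (Jmatch Hm Hw HW H1' H2).
  move=> u w; exact: (Jstable Hm Hw HW H1' H2).
have [[Aw Am Af] As] := H1; have [[Bw Bm Bf] Bs] := H2.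
have [[Cw Cm Cf] Cs] := H1'.
have c1 : #|M1'| <= #|M1|.
  have e : #|[set p.2 | p in M1']| = #|M1'|.
    apply: card_in_imset; case=> u1 w1 [u2 w2] h1 h2 /= ee; subst w2.
    by rewrite (Cf _ _ _ h1 h2).
  rewrite -e; apply: leq_trans (leq_imset_card (fun p : U * W => p.2) M1).
  apply: subset_leq_card; apply/subsetP=> w /imsetP [[u w']] h ->{w} /=.
  case: (classic (exists u0, (u0, w') \in M1)) => [[u0 h0]|nu].
    by apply/imsetP; exists (u0, w').
  exfalso; apply: (As u w'); split.
  - exact: Cw _ h.
  - by apply/negP=> h0; apply: nu; exists u.
  - case: (classic (exists w0, (u, w0) \in M1)) => [[w0 h0]|nw].
      case: (Hd _ _ h0) => y [hy ho]; rewrite (Cm _ _ _ hy h) in ho.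
      case: ho => [ee|p]; first by subst w0; case: nu; exists u.
      by right; exists w0.
    by left=> w0; apply/negP=> h0; apply: nw; exists w0.
  - by left=> u0; apply/negP=> h0; apply: nu; exists u0.
have c2 : #|M1 :&: M2| <= #|M1' :&: J pm M1' M2|.
  have e : #|[set p.1 | p in M1 :&: M2]| = #|M1 :&: M2|.
    apply: card_in_imset; case=> u1 w1 [u2 w2]; rewrite !inE => /andP [h1 _] /andP [h2 _] /= ee.
    subst u2; by rewrite (Am _ _ _ h1 h2).
  rewrite -e; apply: leq_trans (leq_imset_card (fun p : U * W => p.1) _).
  apply: subset_leq_card; apply/subsetP=> u /imsetP [[u' w]]; rewrite inE => /andP [a b] -> /=.
  case: (Hd _ _ a) => w' [h' ho].
  apply/imsetP; exists (u', w') => //; rewrite inE h' /=.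
  apply/inJ; left; split=> // y hy; rewrite (Bm _ _ _ hy b).
  case: ho => [->|p p']; first by case: (Hm u') => irr _ _; apply/negP; exact: irr.
  case: (Hm u') => irr tr _; by move: (irr w); rewrite (tr _ _ _ p' p).
rewrite !cardsD; apply: leq_trans (leq_sub2r _ c1) _; exact: leq_sub2l c2.
Qed.
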